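(* Let $a<b$, $n\in\mathbb{N}$, $h=\frac{b-a}{n}$ and $x_k=a+k\frac{b-a}{n}$ for $k=0,\dots,n$. Let $f:[a,b]\to\mathbb{R}$ be convex. For $j=1,\dots,n$ and $t\in[0,1]$ define \[ H_j(t)=\frac1h\int_{x_{j-1}}^{x_j} f\left(tu+(1-t)\frac{x_{j-1}+x_j}{2}\right)du, \] \[ F_j(t)=\frac{1}{2h}\int_{x_{j-1}}^{x_j}\left[f\left(\frac{1+t}{2}x_{j-1}+\frac{1-t}{2}u\right)+f\left(\frac{1+t}{2}x_j+\frac{1-t}{2}u\right)\right]du, \] and $H(t)=\sum_{j=1}^n H_j(t)$, $F(t)=\sum_{j=1}^n F_j(t)$ for $t\in[0,1]$. Then: (1) $H$ and $F$ are convex on $[0,1]$; (2) $H$ and $F$ are monotonic nondecreasing on $[0,1]$; (3) $\sup_{t\in[0,1]}H(t)=\frac1h\int_a^b f(u)\,du=H(1)$ and $\inf_{t\in[0,1]}H(t)=\sum_{k=1}^n f\left(\frac{x_{k-1}+x_k}{2}\right)=H(0)$; and $\sup_{t\in[0,1]}F(t)=\frac12\left[f(a)+2\sum_{k=1}^{n-1}f(x_k)+f(b)\right]=F(1)$ and $\inf_{t\in[0,1]}F(t)=\frac1h\int_a^b f(u)\,du=F(0)$. *)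

(* Defs.v *)
From Stdlib Require Import Reals Lra.
From Coquelicot Require Import Coquelicot.
Open Scope R_scope.

Definition convex_on (a b : R) (f : R -> R) : Prop :=
  forall x y t, a <= x <= b -> a <= y <= b -> 0 <= t <= 1 ->
    f (t * x + (1 - t) * y) <= t * f x + (1 - t) * f y.

Definition nondecreasing_on (a b : R) (f : R -> R) : Prop :=
  forall s t, a <= s -> s <= t -> t <= b -> f s <= f t.

Definition is_glb (E : R -> Prop) (m : R) : Prop :=
  (forall x, E x -> m <= x) /\ (forall c, (forall x, E x -> c <= x) -> c <= m).

Definition image01 (g : R -> R) : R -> Prop :=
  fun y => exists t, 0 <= t <= 1 /\ y = g t.

Definition node (a b : R) (n k : nat) : R := a + INR k * ((b - a) / INR n).

Definition Hj (f : R -> R) (a b : R) (n j : nat) (t : R) : R :=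
  let h := (b - a) / INR n in
  let xl := node a b n (j - 1) in
  let xr := node a b n j in
  / h * RInt (fun u => f (t * u + (1 - t) * ((xl + xr) / 2))) xl xr.

Definition Fj (f : R -> R) (a b : R) (n j : nat) (t : R) : R :=
  let h := (b - a) / INR n in
  let xl := node a b n (j - 1) in
  let xr := node a b n j in
  / (2 * h) * RInt (fun u => f ((1 + t) / 2 * xl + (1 - t) / 2 * u)
                            + f ((1 + t) / 2 * xr + (1 - t) / 2 * u)) xl xr.

Definition Hsum (f : R -> R) (a b : R) (n : nat) (t : R) : R :=
  sum_n_m (fun j => Hj f a b n j t) 1 n.

Definition Fsum (f : R -> R) (a b : R) (n : nat) (t : R) : R :=
  sum_n_m (fun j => Fj f a b n j t) 1 n.

(* Main.v *)
Require Import Defs.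
From Stdlib Require Import Reals Lra Lia.
From Coquelicot Require Import Coquelicot.
Open Scope R_scope.

Ltac eqR := match goal with |- @eq _ ?x ?y => change (@eq R x y) end.

Lemma conv3 (a b : R) (f : R -> R) x y z :
  convex_on a b f -> a <= x -> x < y -> y < z -> z <= b ->
  (z - x) * f y <= (z - y) * f x + (y - x) * f z.
Proof.
  intros Hc H1 H2 H3 H4.
  set (t := (z - y) / (z - x)).
  assert (Ht : 0 <= t <= 1).
  { unfold t; split.
    - apply Rdiv_le_0_compat; lra.
    - assert (0 <= (y-x)/(z-x)) by (apply Rdiv_le_0_compat; lra).
      assert ((z - y) / (z - x) = 1 - (y-x)/(z-x)) by (field; intro; lra).
      lra. }
  assert (Hy : t * x + (1 - t) * z = y) by (unfold t; field; intro; lra).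
  pose proof (Hc x z t ltac:(lra) ltac:(lra) Ht) as Hf.
  rewrite Hy in Hf.
  assert (E1 : (z - x) * t = z - y) by (unfold t; field; intro; lra).
  assert (E2 : (z - x) * (1 - t) = y - x) by (unfold t; field; intro; lra).
  apply Rmult_le_compat_l with (r := z - x) in Hf; [|lra].
  rewrite Rmult_plus_distr_l, <- !Rmult_assoc, E1, E2 in Hf. exact Hf.
Qed.

Lemma div_le_cross A B p q : 0 < p -> 0 < q -> A * q <= B * p -> A / p <= B / q.
Proof.
  intros Hp Hq H.
  apply Rmult_le_reg_r with (p * q); [nra|].
  replace (A / p * (p * q)) with (A * q) by (field; intro; lra).
  replace (B / q * (p * q)) with (B * p) by (field; intro; lra).
  exact H.
Qed.

Lemma slope_mono (a b : R) (f : R -> R) c x y :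
  convex_on a b f -> a <= x -> x < y -> y < c -> c <= b ->
  (f c - f x) / (c - x) <= (f c - f y) / (c - y).
Proof.
  intros Hc H1 H2 H3 H4.
  pose proof (conv3 a b f x y c Hc H1 H2 H3 H4).
  apply div_le_cross; [lra|lra|]. nra.
Qed.

Lemma lim_left (a b : R) (f : R -> R) :
  a < b -> convex_on a b f ->
  exists L, forall eps, 0 < eps -> exists del, 0 < del /\
    forall x, a < x < a + del -> Rabs (f x - L) < eps.
Proof.
  intros Hab Hc.
  set (c := (a + b) / 2).
  assert (Hac : a < c) by (unfold c; lra).
  assert (Hcb : c <= b) by (unfold c; lra).
  set (s := fun x => (f c - f x) / (c - x)).
  assert (Hmono : forall x y, a <= x -> x < y -> y < c -> s x <= s y).
  { intros x y H1 H2 H3. unfold s. apply (slope_mono a b); auto; lra. }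
  set (E := fun y => exists x, a < x < c /\ y = - s x).
  assert (HB : bound E).
  { exists (- s a). intros y [x [Hx ->]].
    assert (s a <= s x) by (apply Hmono; lra). lra. }
  assert (HE : exists y, E y).
  { exists (- s ((a + c)/2)). exists ((a+c)/2). split; [lra|reflexivity]. }
  destruct (completeness E HB HE) as [M [HM1 HM2]].
  set (S := - M).
  assert (HS1 : forall x, a < x < c -> S <= s x).
  { intros x Hx. assert (- s x <= M) by (apply HM1; exists x; split; auto).
    unfold S; lra. }
  assert (HS2 : forall e, 0 < e -> exists x, a < x < c /\ s x < S + e).
  { intros e He.
    destruct (Classical_Prop.classic (exists x, a < x < c /\ s x < S + e)) as [H|H]; auto.
    exfalso.
    assert (M <= M - e); [|lra].
    apply HM2. intros y [x [Hx ->]].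
    destruct (Rlt_le_dec (s x) (S + e)) as [Hl|Hl].
    - exfalso; apply H; exists x; auto.
    - unfold S in Hl; lra. }
  exists (f c - S * (c - a)).
  intros eps Heps.
  destruct (HS2 (eps / (2 * (c - a)))) as [x1 [Hx1 Hs1]].
  { apply Rdiv_lt_0_compat; lra. }
  set (K := Rabs S + 1).
  assert (HK : 0 < K) by (unfold K; pose proof (Rabs_pos S); lra).
  exists (Rmin (x1 - a) (eps / (2 * K))).
  split.
  { apply Rmin_pos; [lra|]. apply Rdiv_lt_0_compat; lra. }
  intros x Hx.
  assert (Hd1 := Rmin_l (x1 - a) (eps / (2 * K))).
  assert (Hd2 := Rmin_r (x1 - a) (eps / (2 * K))).
  assert (Hx1' : x < x1) by lra.
  assert (HSx : S <= s x) by (apply HS1; lra).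
  assert (Hsx : s x <= s x1) by (apply Hmono; lra).
  assert (Hfx : f x = f c - s x * (c - x)) by (unfold s; field; intro; lra).
  rewrite Hfx.
  replace (f c - s x * (c - x) - (f c - S * (c - a)))
    with ((S - s x) * (c - x) + S * (x - a)) by ring.
  eapply Rle_lt_trans; [apply Rabs_triang|].
  rewrite !Rabs_mult.
  assert (T1 : Rabs (S - s x) * Rabs (c - x) <= eps / 2).
  { rewrite (Rabs_left1 (S - s x)) by lra.
    rewrite (Rabs_right (c - x)) by lra.
    assert (- (S - s x) <= eps / (2 * (c - a))) by lra.
    assert (0 <= - (S - s x)) by lra.
    apply Rle_trans with (eps / (2 * (c - a)) * (c - a)).
    - apply Rmult_le_compat; lra.
    - right; field; intro; lra. }
  assert (T2 : Rabs S * Rabs (x - a) < eps / 2).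
  { rewrite (Rabs_right (x - a)) by lra.
    apply Rle_lt_trans with (K * (x - a)).
    - apply Rmult_le_compat_r; [lra|]. unfold K; lra.
    - apply Rlt_le_trans with (K * (eps / (2 * K))).
      + apply Rmult_lt_compat_l; lra.
      + right; field; intro; lra. }
  lra.
Qed.

Lemma convex_refl (a b : R) (f : R -> R) :
  convex_on a b f -> convex_on a b (fun x => f (a + b - x)).
Proof.
  intros Hc x y t Hx Hy Ht.
  replace (a + b - (t * x + (1 - t) * y)) with (t * (a + b - x) + (1 - t) * (a + b - y)) by ring.
  apply Hc; lra.
Qed.

Lemma lim_right (a b : R) (f : R -> R) :
  a < b -> convex_on a b f ->
  exists L, forall eps, 0 < eps -> exists del, 0 < del /\
    forall x, b - del < x < b -> Rabs (f x - L) < eps.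
Proof.
  intros Hab Hc.
  destruct (lim_left a b (fun x => f (a + b - x)) Hab (convex_refl a b f Hc)) as [L HL].
  exists L. intros eps Heps. destruct (HL eps Heps) as [e0 [Hd Hd2]].
  exists e0. split; auto. intros x Hx.
  replace x with (a + b - (a + b - x)) by ring. apply Hd2. lra.
Qed.

Lemma abs_between A B y : A <= y <= B \/ B <= y <= A -> Rabs y <= Rabs A + Rabs B.
Proof.
  intros H. unfold Rabs; destruct (Rcase_abs y); destruct (Rcase_abs A); destruct (Rcase_abs B); lra.
Qed.

Lemma lip_interior (a b : R) (f : R -> R) x0 :
  convex_on a b f -> a < x0 < b ->
  exists K d0, 0 <= K /\ 0 < d0 /\ forall x, Rabs (x - x0) < d0 ->
    Rabs (f x - f x0) <= K * Rabs (x - x0).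
Proof.
  intros Hc Hx0.
  set (p := (a + x0) / 2). set (q := (x0 + b) / 2).
  assert (Hp : a < p < x0) by (unfold p; lra).
  assert (Hq : x0 < q < b) by (unfold q; lra).
  set (S1 := (f q - f x0) / (q - x0)).
  set (S2 := (f x0 - f p) / (x0 - p)).
  exists (Rabs S1 + Rabs S2), (Rmin (x0 - p) (q - x0)).
  split; [pose proof (Rabs_pos S1); pose proof (Rabs_pos S2); lra|].
  split; [apply Rmin_pos; lra|].
  intros x Hx.
  assert (Hm1 := Rmin_l (x0 - p) (q - x0)).
  assert (Hm2 := Rmin_r (x0 - p) (q - x0)).
  assert (Hxr : p < x < q) by (apply Rabs_def2 in Hx; lra).
  assert (E1 : forall u, u * (f q - f x0) = (q - x0) * (u * S1)) by (intro; unfold S1; field; intro; lra).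
  assert (E2 : forall u, u * (f x0 - f p) = (x0 - p) * (u * S2)) by (intro; unfold S2; field; intro; lra).
  replace ((Rabs S1 + Rabs S2) * Rabs (x - x0)) with (Rabs ((x - x0) * S1) + Rabs ((x - x0) * S2))
    by (rewrite !Rabs_mult; ring).
  apply abs_between.
  destruct (Rtotal_order x x0) as [Hlt | [Heq | Hgt]].
  -
    pose proof (conv3 a b f p x x0 Hc ltac:(lra) ltac:(lra) ltac:(lra) ltac:(lra)) as C1.
    pose proof (conv3 a b f x x0 q Hc ltac:(lra) ltac:(lra) ltac:(lra) ltac:(lra)) as C2.
    assert (A1 : (x0 - p) * (f x - f x0) <= (x0 - p) * ((x - x0) * S2)).
    { rewrite <- E2. lra. }
    assert (A2 : (q - x0) * ((x - x0) * S1) <= (q - x0) * (f x - f x0)).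
    { rewrite <- E1. lra. }
    apply Rmult_le_reg_l in A1; [|lra]. apply Rmult_le_reg_l in A2; [|lra].
    left; lra.
  - subst. replace (x0 - x0) with 0 by ring. rewrite !Rmult_0_l. left; lra.
  - pose proof (conv3 a b f x0 x q Hc ltac:(lra) ltac:(lra) ltac:(lra) ltac:(lra)) as C1.
    pose proof (conv3 a b f p x0 x Hc ltac:(lra) ltac:(lra) ltac:(lra) ltac:(lra)) as C2.
    assert (A1 : (q - x0) * (f x - f x0) <= (q - x0) * ((x - x0) * S1)).
    { rewrite <- E1. lra. }
    assert (A2 : (x0 - p) * ((x - x0) * S2) <= (x0 - p) * (f x - f x0)).
    { rewrite <- E2. lra. }
    apply Rmult_le_reg_l in A1; [|lra]. apply Rmult_le_reg_l in A2; [|lra].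
    right; lra.
Qed.

Lemma convex_ex_RInt (a b : R) (f : R -> R) c d :
  a < b -> convex_on a b f -> a <= c <= b -> a <= d <= b -> ex_RInt f c d.
Proof.
  intros Hab Hc Hcc Hdd.
  destruct (lim_left a b f Hab Hc) as [La HLa].
  destruct (lim_right a b f Hab Hc) as [Lb HLb].
  set (g := fun x => if Rle_dec x a then La else if Rle_dec b x then Lb else f x).
  assert (Hg : forall x, a < x < b -> g x = f x).
  { intros x Hx. unfold g. destruct (Rle_dec x a); [lra|]. destruct (Rle_dec b x); [lra|]. reflexivity. }
  assert (Hcont : forall z, a <= z <= b -> continuity_pt g z).
  { intros z Hz. unfold continuity_pt, continue_in, limit1_in, limit_in. simpl. unfold R_dist.
    intros eps Heps.
    destruct (Req_dec z a) as [Hza | Hza].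
    - subst z. destruct (HLa eps Heps) as [e0 [Hd Hd2]].
      exists (Rmin e0 (b - a)). split; [apply Rmin_pos; lra|].
      intros x [_ Hx]. pose proof (Rmin_l e0 (b - a)). pose proof (Rmin_r e0 (b - a)).
      apply Rabs_def2 in Hx.
      unfold g at 2. destruct (Rle_dec a a); [|lra].
      unfold g. destruct (Rle_dec x a).
      + rewrite Rminus_diag, Rabs_R0; lra.
      + destruct (Rle_dec b x); [lra|]. apply Hd2; lra.
    - destruct (Req_dec z b) as [Hzb | Hzb].
      + subst z. destruct (HLb eps Heps) as [e0 [Hd Hd2]].
        exists (Rmin e0 (b - a)). split; [apply Rmin_pos; lra|].
        intros x [_ Hx]. pose proof (Rmin_l e0 (b - a)). pose proof (Rmin_r e0 (b - a)).
        apply Rabs_def2 in Hx.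
        unfold g at 2. destruct (Rle_dec b a); [lra|]. destruct (Rle_dec b b); [|lra].
        unfold g. destruct (Rle_dec x a); [lra|].
        destruct (Rle_dec b x).
        * rewrite Rminus_diag, Rabs_R0; lra.
        * apply Hd2; lra.
      + destruct (lip_interior a b f z Hc ltac:(lra)) as [K [d0 [HK [Hd0 HL]]]].
        exists (Rmin (Rmin (z - a) (b - z)) (Rmin d0 (eps / (K + 1)))).
        split.
        { apply Rmin_pos; apply Rmin_pos; try lra. apply Rdiv_lt_0_compat; lra. }
        intros x [_ Hx].
        pose proof (Rmin_l (Rmin (z - a) (b - z)) (Rmin d0 (eps / (K + 1)))).
        pose proof (Rmin_r (Rmin (z - a) (b - z)) (Rmin d0 (eps / (K + 1)))).
        pose proof (Rmin_l (z - a) (b - z)). pose proof (Rmin_r (z - a) (b - z)).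
        pose proof (Rmin_l d0 (eps / (K + 1))). pose proof (Rmin_r d0 (eps / (K + 1))).
        pose proof (Rabs_def2 _ _ Hx).
        rewrite !Hg by lra.
        apply Rle_lt_trans with (K * Rabs (x - z)); [apply HL; lra|].
        apply Rle_lt_trans with ((K + 1) * Rabs (x - z)).
        { pose proof (Rabs_pos (x - z)). nra. }
        apply Rlt_le_trans with ((K + 1) * (eps / (K + 1))).
        { apply Rmult_lt_compat_l; lra. }
        right; field; intro; lra. }
  apply ex_RInt_ext with g.
  { intros x Hx. apply Hg.
    pose proof (Rmin_glb a c d) as M1. pose proof (Rmax_lub c d b) as M2.
    split.
    - apply Rle_lt_trans with (Rmin c d); [apply Rmin_glb; lra|lra].
    - apply Rlt_le_trans with (Rmax c d); [lra|apply Rmax_lub; lra]. }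
  apply (ex_RInt_continuous (V:=R_CompleteNormedModule)). intros z Hz.
  apply continuity_pt_filterlim. apply Hcont.
  split.
  - apply Rle_trans with (Rmin c d); [apply Rmin_glb; lra|lra].
  - apply Rle_trans with (Rmax c d); [lra|apply Rmax_lub; lra].
Qed.

Lemma RInt_plusR (f g : R -> R) a b : ex_RInt f a b -> ex_RInt g a b ->
  @eq R (RInt (fun x => f x + g x) a b) (RInt f a b + RInt g a b).
Proof. intros H1 H2. exact (RInt_plus f g a b H1 H2). Qed.
Lemma RInt_scalR (f : R -> R) a b l : ex_RInt f a b ->
  @eq R (RInt (fun x => l * f x) a b) (l * RInt f a b).
Proof. intros H1. exact (RInt_scal f a b l H1). Qed.
Lemma RInt_constR a b (c : R) : @eq R (RInt (fun _ => c) a b) ((b - a) * c).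
Proof. exact (RInt_const a b c). Qed.
Lemma ex_RInt_plusR (f g : R -> R) a b : ex_RInt f a b -> ex_RInt g a b ->
  ex_RInt (fun x => f x + g x) a b.
Proof. intros H1 H2. exact (ex_RInt_plus f g a b H1 H2). Qed.
Lemma ex_RInt_scalR (f : R -> R) a b l : ex_RInt f a b ->
  ex_RInt (fun x => l * f x) a b.
Proof. intros H1. exact (ex_RInt_scal f a b l H1). Qed.
Lemma RInt_ChaslesR (f : R -> R) a b c : ex_RInt f a b -> ex_RInt f b c ->
  RInt f a b + RInt f b c = RInt f a c.
Proof. intros H1 H2. exact (RInt_Chasles f a b c H1 H2). Qed.

Lemma cc_in xl xr al A B : 0 <= al <= 1 -> xl <= A <= xr -> xl <= B <= xr ->
  xl <= al * A + (1 - al) * B <= xr.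
Proof. intros. nra. Qed.

Lemma ex_lin (a b : R) (f : R -> R) p q c d :
  a < b -> convex_on a b f -> c <= d ->
  (forall u, c <= u <= d -> a <= p * u + q <= b) ->
  ex_RInt (fun u => f (p * u + q)) c d.
Proof.
  intros Hab Hc Hcd Hu.
  destruct (Req_dec p 0) as [Hp | Hp].
  - apply ex_RInt_ext with (fun _ => f q).
    + intros x _. subst p. f_equal. ring.
    + apply ex_RInt_const.
  - assert (E : ex_RInt f (p * c + q) (p * d + q)).
    { apply (convex_ex_RInt a b); auto; apply Hu; lra. }
    pose proof (ex_RInt_comp_lin f p q c d E) as E2.
    apply (ex_RInt_scalR _ _ _ (/ p)) in E2.
    apply ex_RInt_ext with (2 := E2).
    intros x _. change (/ p * (p * f (p * x + q)) = f (p * x + q)). field. exact Hp.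
Qed.

Lemma refl_int (g : R -> R) xl xr :
  ex_RInt g xl xr -> ex_RInt (fun y => g (xl + xr - y)) xl xr ->
  @eq R (RInt (fun y => g (xl + xr - y)) xl xr) (RInt g xl xr).
Proof.
  intros E1 E2.
  assert (E3 : ex_RInt g (-1 * xl + (xl + xr)) (-1 * xr + (xl + xr))).
  { replace (-1 * xl + (xl + xr)) with xr by ring.
    replace (-1 * xr + (xl + xr)) with xl by ring.
    apply ex_RInt_swap; exact E1. }
  pose proof (RInt_comp_lin g (-1) (xl + xr) xl xr E3) as H.
  replace (-1 * xl + (xl + xr)) with xr in H by ring.
  replace (-1 * xr + (xl + xr)) with xl in H by ring.
  rewrite <- (opp_RInt_swap g xl xr E1) in H.
  change (RInt (fun y => -1 * g (-1 * y + (xl + xr))) xl xr = - RInt g xl xr) in H.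
  rewrite (RInt_ext _ (fun y => -1 * g (xl + xr - y))) in H.
  2: { intros x _. f_equal. f_equal. ring. }
  rewrite RInt_scalR in H by exact E2. lra.
Qed.

Lemma conv_int (G : R -> R -> R) lo hi c0 xl xr :
  xl <= xr -> 0 <= c0 ->
  (forall t, lo <= t <= hi -> ex_RInt (G t) xl xr) ->
  (forall s t l u, lo <= s <= hi -> lo <= t <= hi -> 0 <= l <= 1 -> xl <= u <= xr ->
     G (l * s + (1 - l) * t) u <= l * G s u + (1 - l) * G t u) ->
  convex_on lo hi (fun t => c0 * RInt (G t) xl xr).
Proof.
  intros Hx Hc0 Hex Hpt s t l Hs Ht Hl.
  assert (Hw : lo <= l * s + (1 - l) * t <= hi) by (apply cc_in; lra).
  replace (l * (c0 * RInt (G s) xl xr) + (1 - l) * (c0 * RInt (G t) xl xr))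
    with (c0 * (RInt (fun u => l * G s u) xl xr + RInt (fun u => (1 - l) * G t u) xl xr)).
  2: { rewrite !RInt_scalR by auto. ring. }
  apply Rmult_le_compat_l; [exact Hc0|].
  rewrite <- RInt_plusR by (apply ex_RInt_scalR; auto).
  apply RInt_le; auto.
  - apply ex_RInt_plusR; apply ex_RInt_scalR; auto.
  - intros u Hu. apply Hpt; auto; lra.
Qed.

Definition G1 (f : R -> R) xl xr t u := f (t * u + (1 - t) * ((xl + xr) / 2)).
Definition G2 (f : R -> R) xl xr t u :=
  f ((1 + t) / 2 * xl + (1 - t) / 2 * u) + f ((1 + t) / 2 * xr + (1 - t) / 2 * u).

Lemma G1_ex a b f xl xr t : a < b -> convex_on a b f -> a <= xl -> xl < xr -> xr <= b ->
  0 <= t <= 1 -> ex_RInt (G1 f xl xr t) xl xr.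
Proof.
  intros Hab Hc H1 H2 H3 Ht. unfold G1.
  apply (ex_lin a b f t ((1 - t) * ((xl + xr) / 2))); auto; [lra|].
  intros u Hu. assert (xl <= t * u + (1 - t) * ((xl + xr) / 2) <= xr) by (apply cc_in; lra). lra.
Qed.

Lemma G2_ex a b f xl xr t : a < b -> convex_on a b f -> a <= xl -> xl < xr -> xr <= b ->
  -1 <= t <= 1 -> ex_RInt (G2 f xl xr t) xl xr.
Proof.
  intros Hab Hc H1 H2 H3 Ht. unfold G2.
  apply ex_RInt_plusR.
  - apply ex_RInt_ext with (fun u => f ((1 - t) / 2 * u + (1 + t) / 2 * xl)).
    { intros; f_equal; ring. }
    apply (ex_lin a b f); auto; [lra|].
    intros u Hu.
    assert (xl <= (1 + t) / 2 * xl + (1 - (1 + t) / 2) * u <= xr) by (apply cc_in; lra).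
    replace ((1 - t) / 2 * u + (1 + t) / 2 * xl) with ((1 + t) / 2 * xl + (1 - (1 + t) / 2) * u) by field.
    lra.
  - apply ex_RInt_ext with (fun u => f ((1 - t) / 2 * u + (1 + t) / 2 * xr)).
    { intros; f_equal; ring. }
    apply (ex_lin a b f); auto; [lra|].
    intros u Hu.
    assert (xl <= (1 + t) / 2 * xr + (1 - (1 + t) / 2) * u <= xr) by (apply cc_in; lra).
    replace ((1 - t) / 2 * u + (1 + t) / 2 * xr) with ((1 + t) / 2 * xr + (1 - (1 + t) / 2) * u) by field.
    lra.
Qed.

Lemma G1_conv a b f xl xr c0 : a < b -> convex_on a b f -> a <= xl -> xl < xr -> xr <= b -> 0 <= c0 ->
  convex_on 0 1 (fun t => c0 * RInt (G1 f xl xr t) xl xr).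
Proof.
  intros Hab Hc H1 H2 H3 Hc0.
  apply conv_int; auto; [lra| intros; apply (G1_ex a b); auto |].
  intros s t l u Hs Ht Hl Hu. unfold G1.
  set (m := (xl + xr) / 2).
  replace ((l * s + (1 - l) * t) * u + (1 - (l * s + (1 - l) * t)) * m)
    with (l * (s * u + (1 - s) * m) + (1 - l) * (t * u + (1 - t) * m)) by ring.
  assert (xl <= s * u + (1 - s) * m <= xr) by (apply cc_in; unfold m; lra).
  assert (xl <= t * u + (1 - t) * m <= xr) by (apply cc_in; unfold m; lra).
  apply Hc; auto; lra.
Qed.

Lemma G2_conv a b f xl xr c0 : a < b -> convex_on a b f -> a <= xl -> xl < xr -> xr <= b -> 0 <= c0 ->
  convex_on (-1) 1 (fun t => c0 * RInt (G2 f xl xr t) xl xr).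
Proof.
  intros Hab Hc H1 H2 H3 Hc0.
  apply conv_int; auto; [lra| intros; apply (G2_ex a b); auto |].
  intros s t l u Hs Ht Hl Hu. unfold G2.
  assert (K : forall y, xl <= y <= xr ->
    f ((1 + (l * s + (1 - l) * t)) / 2 * y + (1 - (l * s + (1 - l) * t)) / 2 * u)
    <= l * f ((1 + s) / 2 * y + (1 - s) / 2 * u) + (1 - l) * f ((1 + t) / 2 * y + (1 - t) / 2 * u)).
  { intros y Hy.
    replace ((1 + (l * s + (1 - l) * t)) / 2 * y + (1 - (l * s + (1 - l) * t)) / 2 * u)
      with (l * ((1 + s) / 2 * y + (1 - s) / 2 * u) + (1 - l) * ((1 + t) / 2 * y + (1 - t) / 2 * u)) by field.
    assert (xl <= (1 + s) / 2 * y + (1 - (1 + s) / 2) * u <= xr) by (apply cc_in; lra).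
    assert (xl <= (1 + t) / 2 * y + (1 - (1 + t) / 2) * u <= xr) by (apply cc_in; lra).
    replace ((1 - s) / 2) with (1 - (1 + s) / 2) by field.
    replace ((1 - t) / 2) with (1 - (1 + t) / 2) by field.
    apply Hc; auto; lra. }
  pose proof (K xl ltac:(lra)). pose proof (K xr ltac:(lra)). lra.
Qed.

Lemma G1_0 f xl xr : @eq R (RInt (G1 f xl xr 0) xl xr) ((xr - xl) * f ((xl + xr) / 2)).
Proof.
  rewrite (RInt_ext _ (fun _ => f ((xl + xr) / 2))).
  - apply RInt_constR.
  - intros x _. unfold G1. f_equal. ring.
Qed.

Lemma G1_1 f xl xr : @eq R (RInt (G1 f xl xr 1) xl xr) (RInt f xl xr).
Proof.
  apply RInt_ext. intros x _. unfold G1. f_equal. ring.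
Qed.

Lemma G1_ge a b f xl xr t : a < b -> convex_on a b f -> a <= xl -> xl < xr -> xr <= b ->
  0 <= t <= 1 -> (xr - xl) * f ((xl + xr) / 2) <= RInt (G1 f xl xr t) xl xr.
Proof.
  intros Hab Hc H1 H2 H3 Ht.
  set (m := (xl + xr) / 2).
  pose proof (G1_ex a b f xl xr t Hab Hc H1 H2 H3 Ht) as E1.
  assert (E2 : ex_RInt (fun y => G1 f xl xr t (xl + xr - y)) xl xr).
  { unfold G1. apply ex_RInt_ext with (fun y => f ((- t) * y + (t * (xl + xr) + (1 - t) * m))).
    { intros; f_equal; unfold m; ring. }
    apply (ex_lin a b f); auto; [lra|].
    intros u Hu.
    assert (xl <= t * (xl + xr - u) + (1 - t) * m <= xr) by (apply cc_in; unfold m; lra).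
    replace (- t * u + (t * (xl + xr) + (1 - t) * m)) with (t * (xl + xr - u) + (1 - t) * m) by ring.
    lra. }
  pose proof (refl_int _ xl xr E1 E2) as R.
  assert (2 * ((xr - xl) * f m) <= 2 * RInt (G1 f xl xr t) xl xr); [|lra].
  replace (2 * RInt (G1 f xl xr t) xl xr)
    with (RInt (G1 f xl xr t) xl xr + RInt (fun y => G1 f xl xr t (xl + xr - y)) xl xr) by lra.
  rewrite <- RInt_plusR by auto.
  replace (2 * ((xr - xl) * f m)) with (RInt (fun _ => 2 * f m) xl xr) by (rewrite RInt_constR; eqR; ring).
  apply RInt_le; [lra| apply ex_RInt_const | apply ex_RInt_plusR; auto |].
  intros u Hu. unfold G1. fold m.
  assert (A1 : xl <= t * u + (1 - t) * m <= xr) by (apply cc_in; unfold m; lra).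
  assert (A2 : xl <= t * (xl + xr - u) + (1 - t) * m <= xr) by (apply cc_in; unfold m; lra).
  pose proof (Hc (t * u + (1 - t) * m) (t * (xl + xr - u) + (1 - t) * m) (/2) ltac:(lra) ltac:(lra) ltac:(lra)) as K.
  replace (/ 2 * (t * u + (1 - t) * m) + (1 - / 2) * (t * (xl + xr - u) + (1 - t) * m)) with m in K
    by (unfold m; field).
  lra.
Qed.

Lemma G2_m1 a b f xl xr : a < b -> convex_on a b f -> a <= xl -> xl < xr -> xr <= b ->
  @eq R (RInt (G2 f xl xr (-1)) xl xr) (2 * RInt f xl xr).
Proof.
  intros Hab Hc H1 H2 H3.
  rewrite (RInt_ext _ (fun u => 2 * f u)).
  - apply RInt_scalR. apply (convex_ex_RInt a b); auto; lra.
  - intros x _. unfold G2.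
    replace ((1 + -1) / 2 * xl + (1 - -1) / 2 * x) with x by field.
    replace ((1 + -1) / 2 * xr + (1 - -1) / 2 * x) with x by field. eqR; ring.
Qed.

Lemma G2_1 f xl xr : @eq R (RInt (G2 f xl xr 1) xl xr) ((xr - xl) * (f xl + f xr)).
Proof.
  rewrite (RInt_ext _ (fun _ => f xl + f xr)).
  - apply RInt_constR.
  - intros x _. unfold G2.
    replace ((1 + 1) / 2 * xl + (1 - 1) / 2 * x) with xl by field.
    replace ((1 + 1) / 2 * xr + (1 - 1) / 2 * x) with xr by field. eqR; ring.
Qed.

Lemma half_int a b f xl xr y : a < b -> convex_on a b f -> a <= xl -> xl < xr -> xr <= b ->
  xl <= y <= xr ->
  @eq R (RInt (fun u => f (/ 2 * u + / 2 * y)) xl xr) (2 * RInt f (/ 2 * xl + / 2 * y) (/ 2 * xr + / 2 * y)).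
Proof.
  intros Hab Hc H1 H2 H3 Hy.
  assert (E : ex_RInt f (/ 2 * xl + / 2 * y) (/ 2 * xr + / 2 * y)).
  { apply (convex_ex_RInt a b); auto; lra. }
  pose proof (RInt_comp_lin f (/ 2) (/ 2 * y) xl xr E) as K.
  change (RInt (fun y0 => / 2 * f (/ 2 * y0 + / 2 * y)) xl xr =
          RInt f (/ 2 * xl + / 2 * y) (/ 2 * xr + / 2 * y)) in K.
  rewrite RInt_scalR in K.
  - lra.
  - apply (ex_lin a b f); auto; [lra|]. intros; lra.
Qed.

Lemma G2_0 a b f xl xr : a < b -> convex_on a b f -> a <= xl -> xl < xr -> xr <= b ->
  @eq R (RInt (G2 f xl xr 0) xl xr) (2 * RInt f xl xr).
Proof.
  intros Hab Hc H1 H2 H3.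
  unfold G2.
  rewrite RInt_plusR.
  2: { apply ex_RInt_ext with (fun u => f (/ 2 * u + / 2 * xl)).
       { intros; f_equal; field. }
       apply (ex_lin a b f); auto; [lra|]. intros; lra. }
  2: { apply ex_RInt_ext with (fun u => f (/ 2 * u + / 2 * xr)).
       { intros; f_equal; field. }
       apply (ex_lin a b f); auto; [lra|]. intros; lra. }
  rewrite (RInt_ext _ (fun u => f (/ 2 * u + / 2 * xl))) by (intros; f_equal; field).
  rewrite (RInt_ext (fun u => f ((1 + 0) / 2 * xr + (1 - 0) / 2 * u)) (fun u => f (/ 2 * u + / 2 * xr)))
    by (intros; f_equal; field).
  rewrite (half_int a b f xl xr xl), (half_int a b f xl xr xr) by (auto; lra).
  replace (/ 2 * xl + / 2 * xl) with xl by field.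
  replace (/ 2 * xr + / 2 * xr) with xr by field.
  replace (/ 2 * xr + / 2 * xl) with ((xl + xr) / 2) by field.
  replace (/ 2 * xl + / 2 * xr) with ((xl + xr) / 2) by field.
  rewrite <- (RInt_ChaslesR f xl ((xl + xr) / 2) xr); [ring| |];
    apply (convex_ex_RInt a b); auto; lra.
Qed.
Lemma sum_le_loc (u v : nat -> R) n m :
  (forall k, (n <= k <= m)%nat -> u k <= v k) -> sum_n_m u n m <= sum_n_m v n m.
Proof.
  intros H.
  rewrite (sum_n_m_ext_loc u (fun k => Rmin (u k) (v k))).
  - apply sum_n_m_le. intros k. apply Rmin_r.
  - intros k Hk. rewrite Rmin_left; auto.
Qed.

Lemma sum_lin (A B : nat -> R) l k n m :
  @eq R (sum_n_m (fun j => l * A j + k * B j) n m) (l * sum_n_m A n m + k * sum_n_m B n m).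
Proof.
  rewrite (sum_n_m_plus (G:=R_AbelianMonoid) (fun j => l * A j) (fun j => k * B j)).
  rewrite (sum_n_m_mult_l (K:=R_Ring) l A), (sum_n_m_mult_l (K:=R_Ring) k B).
  reflexivity.
Qed.

Lemma sum_convex (G : nat -> R -> R) lo hi n :
  (forall j, (1 <= j <= n)%nat -> convex_on lo hi (G j)) ->
  convex_on lo hi (fun t => sum_n_m (fun j => G j t) 1 n).
Proof.
  intros HG s t l Hs Ht Hl.
  rewrite <- sum_lin.
  apply sum_le_loc. intros k Hk. apply HG; auto.
Qed.

Lemma nondec_of (g : R -> R) :
  convex_on 0 1 g -> (forall t, 0 <= t <= 1 -> g 0 <= g t) -> nondecreasing_on 0 1 g.
Proof.
  intros Hc H0 s t Hs Hst Ht.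
  destruct (Req_dec t 0) as [Ht0 | Ht0].
  - assert (s = t) by lra. subst; lra.
  - set (l := s / t).
    assert (Hl : 0 <= l <= 1).
    { unfold l; split; [apply Rdiv_le_0_compat; lra|].
      apply Rmult_le_reg_r with t; [lra|]. unfold Rdiv. rewrite Rmult_assoc, Rinv_l by lra. lra. }
    pose proof (Hc t 0 l ltac:(lra) ltac:(lra) Hl) as K.
    replace (l * t + (1 - l) * 0) with s in K by (unfold l; field; lra).
    pose proof (H0 t ltac:(lra)). nra.
Qed.

Lemma mono_bounds (g : R -> R) :
  nondecreasing_on 0 1 g -> is_lub (image01 g) (g 1) /\ is_glb (image01 g) (g 0).
Proof.
  intros Hm. split; split.
  - intros y [t [Ht ->]]. apply Hm; lra.
  - intros c Hc. apply Hc. exists 1. split; [lra|reflexivity].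
  - intros y [t [Ht ->]]. apply Hm; lra.
  - intros c Hc. apply Hc. exists 0. split; [lra|reflexivity].
Qed.

Lemma trap (phi : nat -> R) p :
  @eq R (sum_n_m (fun j => (phi (j - 1)%nat + phi j) / 2) 1 (S p))
    (/ 2 * (phi 0%nat + 2 * sum_n_m phi 1 p + phi (S p))).
Proof.
  induction p.
  - rewrite sum_n_n. rewrite sum_n_m_zero by lia. simpl. change (zero : R) with 0. field.
  - rewrite sum_n_Sm by lia. rewrite IHp.
    rewrite (sum_n_Sm phi 1 p) by lia.
    replace (S (S p) - 1)%nat with (S p) by lia.
    change (plus ?x ?y) with (x + y). field.
Qed.

Lemma node_facts a b n j : a < b -> (1 <= j <= n)%nat ->
  a <= node a b n (j - 1) /\ node a b n (j - 1) < node a b n j /\ node a b n j <= b /\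
  node a b n j - node a b n (j - 1) = (b - a) / INR n.
Proof.
  intros Hab Hj.
  assert (Hn : 0 < INR n) by (apply lt_0_INR; lia).
  assert (Hh : 0 < (b - a) / INR n) by (apply Rdiv_lt_0_compat; lra).
  assert (Ej : INR (j - 1) = INR j - 1) by (rewrite minus_INR by lia; reflexivity).
  assert (Hj1 : 1 <= INR j) by (replace 1 with (INR 1) by reflexivity; apply le_INR; lia).
  assert (Hjn : INR j <= INR n) by (apply le_INR; lia).
  assert (Hb : INR n * ((b - a) / INR n) = b - a) by (field; lra).
  unfold node. rewrite Ej.
  assert (INR j * ((b - a) / INR n) <= INR n * ((b - a) / INR n)) by (apply Rmult_le_compat_r; lra).
  repeat split; nra.
Qed.

Lemma tele a b f n c k : a < b -> convex_on a b f -> (k <= n)%nat -> (1 <= n)%nat ->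
  @eq R (sum_n_m (fun j => c * RInt f (node a b n (j - 1)) (node a b n j)) 1 k)
    (c * RInt f a (node a b n k)).
Proof.
  intros Hab Hc Hk Hn.
  induction k.
  - rewrite sum_n_m_zero by lia. unfold node; simpl.
    replace (a + 0 * ((b - a) / INR n)) with a by ring.
    rewrite RInt_point. change (zero : R) with 0. ring.
  - rewrite sum_n_Sm by lia. rewrite IHk by lia.
    replace (S k - 1)%nat with k by lia.
    change (plus ?x ?y) with (x + y).
    destruct (node_facts a b n (S k) Hab ltac:(lia)) as [N1 [N2 [N3 N4]]].
    replace (S k - 1)%nat with k in * by lia.
    assert (a <= node a b n k) by lra.
    rewrite <- (RInt_ChaslesR f a (node a b n k) (node a b n (S k))).
    + ring.
    + apply (convex_ex_RInt a b); auto; lra.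
    + apply (convex_ex_RInt a b); auto; lra.
Qed.

Lemma node_n a b n : (1 <= n)%nat -> node a b n n = b.
Proof.
  intros Hn. assert (0 < INR n) by (apply lt_0_INR; lia).
  unfold node. field. lra.
Qed.

Lemma node_0 a b n : node a b n 0 = a.
Proof. unfold node. simpl. ring. Qed.

Theorem proposition2p4 (a b : R) (n : nat) (f : R -> R) :
  a < b -> (1 <= n)%nat -> convex_on a b f ->
  let h := (b - a) / INR n in
  let x := node a b n in
  let H := Hsum f a b n in
  let F := Fsum f a b n in
  (* (1) convexity *)
  (convex_on 0 1 H /\ convex_on 0 1 F) /\
  (* (2) monotonicity *)
  (nondecreasing_on 0 1 H /\ nondecreasing_on 0 1 F) /\
  (* (3) sup / inf *)
  (is_lub (image01 H) (/ h * RInt f a b) /\ / h * RInt f a b = H 1 /\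
   is_glb (image01 H) (sum_n_m (fun k => f ((x (k - 1)%nat + x k) / 2)) 1 n) /\
   sum_n_m (fun k => f ((x (k - 1)%nat + x k) / 2)) 1 n = H 0 /\
   is_lub (image01 F) (/ 2 * (f a + 2 * sum_n_m (fun k => f (x k)) 1 (n - 1) + f b)) /\
   / 2 * (f a + 2 * sum_n_m (fun k => f (x k)) 1 (n - 1) + f b) = F 1 /\
   is_glb (image01 F) (/ h * RInt f a b) /\ / h * RInt f a b = F 0).
Proof.
  intros Hab Hn Hc h x H F.
  assert (Hnp : 0 < INR n) by (apply lt_0_INR; lia).
  assert (Hh : 0 < h) by (unfold h; apply Rdiv_lt_0_compat; lra).
  assert (HjE : forall j t, Hj f a b n j t =
    / h * RInt (G1 f (node a b n (j - 1)) (node a b n j) t) (node a b n (j - 1)) (node a b n j))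
    by reflexivity.
  assert (FjE : forall j t, Fj f a b n j t =
    / (2 * h) * RInt (G2 f (node a b n (j - 1)) (node a b n j) t) (node a b n (j - 1)) (node a b n j))
    by reflexivity.
  assert (convH : convex_on 0 1 H).
  { unfold H, Hsum. apply sum_convex. intros j Hj.
    destruct (node_facts a b n j Hab Hj) as [N1 [N2 [N3 N4]]].
    intros s t l Hs Ht Hl. rewrite !HjE.
    apply (G1_conv a b); auto. left; apply Rinv_0_lt_compat; lra. }
  assert (convF2 : convex_on (-1) 1 F).
  { unfold F, Fsum. apply sum_convex. intros j Hj.
    destruct (node_facts a b n j Hab Hj) as [N1 [N2 [N3 N4]]].
    intros s t l Hs Ht Hl. rewrite !FjE.
    apply (G2_conv a b); auto. left; apply Rinv_0_lt_compat; lra. }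
  assert (convF : convex_on 0 1 F).
  { intros s t l Hs Ht Hl. apply convF2; auto; lra. }
  assert (H0le : forall t, 0 <= t <= 1 -> H 0 <= H t).
  { intros t Ht. unfold H, Hsum. apply sum_le_loc. intros j Hj.
    destruct (node_facts a b n j Hab Hj) as [N1 [N2 [N3 N4]]].
    rewrite !HjE. apply Rmult_le_compat_l; [left; apply Rinv_0_lt_compat; lra|].
    rewrite G1_0. apply (G1_ge a b); auto. }
  assert (Fm1 : F (-1) = F 0).
  { unfold F, Fsum. apply sum_n_m_ext_loc. intros j Hj.
    destruct (node_facts a b n j Hab Hj) as [N1 [N2 [N3 N4]]].
    rewrite !FjE. rewrite (G2_m1 a b), (G2_0 a b); auto. }
  assert (F0le : forall t, 0 <= t <= 1 -> F 0 <= F t).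
  { intros t Ht.
    pose proof (convF2 (-1) t (t / (1 + t)) ltac:(lra) ltac:(lra)) as K.
    assert (Hl : 0 <= t / (1 + t) <= 1).
    { split; [apply Rdiv_le_0_compat; lra|].
      apply Rmult_le_reg_r with (1 + t); [lra|].
      unfold Rdiv. rewrite Rmult_assoc, Rinv_l by lra. lra. }
    specialize (K Hl).
    replace (t / (1 + t) * -1 + (1 - t / (1 + t)) * t) with 0 in K by (field; intro; lra).
    rewrite Fm1 in K.
    assert (E : 1 - t / (1 + t) = / (1 + t)) by (field; intro; lra).
    rewrite E in K.
    assert (Hp : 0 < / (1 + t)) by (apply Rinv_0_lt_compat; lra).
    assert (Et : t / (1 + t) = 1 - / (1 + t)) by (field; intro; lra).
    rewrite Et in K.
    assert (K2 : / (1 + t) * F 0 <= / (1 + t) * F t) by lra.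
    apply Rmult_le_reg_l in K2; auto. }
  assert (monH : nondecreasing_on 0 1 H) by (apply nondec_of; auto).
  assert (monF : nondecreasing_on 0 1 F) by (apply nondec_of; auto).
  assert (H1E : H 1 = / h * RInt f a b).
  { unfold H, Hsum.
    rewrite (sum_n_m_ext_loc _ (fun j => / h * RInt f (node a b n (j - 1)) (node a b n j))).
    - rewrite (tele a b f n (/ h) n) by (auto; lia). rewrite node_n by auto. reflexivity.
    - intros j Hj. rewrite HjE, G1_1. reflexivity. }
  assert (H0E : sum_n_m (fun k => f ((x (k - 1)%nat + x k) / 2)) 1 n = H 0).
  { unfold H, Hsum. apply sum_n_m_ext_loc. intros j Hj.
    destruct (node_facts a b n j Hab Hj) as [N1 [N2 [N3 N4]]].
    rewrite HjE, G1_0. unfold x. fold h in N4. rewrite N4. eqR; field. intro; lra. }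
  assert (F0E : F 0 = H 1).
  { unfold F, H, Fsum, Hsum. apply sum_n_m_ext_loc. intros j Hj.
    destruct (node_facts a b n j Hab Hj) as [N1 [N2 [N3 N4]]].
    rewrite FjE, HjE, (G2_0 a b), G1_1 by auto. eqR; field. intro; lra. }
  assert (F1E : / 2 * (f a + 2 * sum_n_m (fun k => f (x k)) 1 (n - 1) + f b) = F 1).
  { unfold F, Fsum.
    rewrite (sum_n_m_ext_loc (fun j => Fj f a b n j 1) (fun j => (f (x (j - 1)%nat) + f (x j)) / 2) 1 n).
    - pose proof (trap (fun k => f (x k)) (n - 1)) as Tr.
      replace (S (n - 1)) with n in Tr by lia.
      rewrite Tr.
      unfold x. rewrite node_0, node_n by auto. reflexivity.
    - intros j Hj.
      destruct (node_facts a b n j Hab Hj) as [N1 [N2 [N3 N4]]].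
      rewrite FjE, G2_1. unfold x. fold h in N4. rewrite N4. eqR; field. intro; lra. }
  destruct (mono_bounds H monH) as [LH GH].
  destruct (mono_bounds F monF) as [LF GF].
  split; [auto|]. split; [auto|].
  rewrite H0E, F1E, <- H1E.
  split; [exact LH|]. split; [reflexivity|]. split; [exact GH|]. split; [reflexivity|].
  split; [exact LF|]. split; [reflexivity|]. split; [rewrite <- F0E; exact GF|].
  symmetry; exact F0E.
Qed.
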